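(* Fix $J=(J_1,J_2)\in\mathbb{R}^2$ and let $S(J)=\{m\in\{1,2,3,4\}: U_m(J)=\min\{U_1(J),U_2(J),U_3(J),U_4(J)\}\}$ and $\mathcal{C}_{S(J)}=\bigcup_{m\in S(J)}\mathcal{C}_m$. Suppose that for every unit ball $b$, every configuration $\sigma_b$ on $b$ belonging to $\mathcal{C}_{S(J)}$ and every unit ball $b'$ neighbouring $b$, there exists exactly one configuration $\sigma'_{b'}$ on $b'$ belonging to $\mathcal{C}_{S(J)}$ that is compatible with $\sigma_b$. Then every ground state $a$ (equivalently, every periodic $a$ with $a_b\in\mathcal{C}_{S(J)}$ for all unit balls $b$) has period not exceeding 2.
   Context: $G_2$ is the free product of three cyclic groups of order two with generators $a_1,a_2,a_3$, identified with the vertex set $V$ of the Cayley tree of order 2 ($g,h$ adjacent iff $h=ga_i$ for some $i$); $d$ is the graph distance. A configuration $\sigma:V\to\{-1,1\}$ is periodic if there is a finite-index subgroup $G^*\subset G_2$ with $\sigma(gh)=\sigma(h)$ for all $g\in G^*,h\in G_2$; it has period not exceeding 2 if such a subgroup of index at most 2 exists. A unit ball is $b=\{y:d(x,y)\le1\}$ (center $x$ and three leaves); $a_b$ is the restriction to $b$. Two distinct unit balls are neighbours if they share an edge; configurations on neighbouring balls are compatible if they coincide on the endpoints of the common edge. A configuration on a unit ball belongs to $\mathcal{C}_1,\mathcal{C}_2,\mathcal{C}_4,\mathcal{C}_3$ according as exactly $3,2,1,0$ of its leaves carry the same value as its center. $U_1(J)=\tfrac32J_1+3J_2$, $U_2(J)=\tfrac12J_1-J_2$,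 $U_3(J)=-\tfrac32J_1+3J_2$, $U_4(J)=-\tfrac12J_1-J_2$ are the values on $\mathcal{C}_1,\dots,\mathcal{C}_4$ of the ball energy $U(\sigma_b)=\tfrac12J_1\sum_{\langle x,y\rangle:\,x,y\in b}\sigma(x)\sigma(y)+J_2\sum_{\{x,y\}\subset b:\,d(x,y)=2}\sigma(x)\sigma(y)$. A ground state is a periodic configuration $a$ with $U(a_b)=\min\{U_1(J),\dots,U_4(J)\}$ for every unit ball $b$. *)

(* Defs.v *)
From HB Require Import structures.
From mathcomp Require Import all_boot all_order all_algebra.
Set Implicit Arguments. Unset Strict Implicit. Unset Printing Implicit Defensive.
Import Order.TTheory GRing.Theory Num.Theory.

(* An element a_{i_1} a_{i_2} ... a_{i_n} (reduced: consecutive letters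
   distinct) is stored as the REVERSED list [:: i_n; ...; i_1]. *)
Definition reduced (w : seq 'I_3) : bool := sorted (fun i j : 'I_3 => i != j) w.

Definition rmul_raw (w : seq 'I_3) (i : 'I_3) : seq 'I_3 :=
  if w is j :: w' then (if j == i then w' else i :: w) else [:: i].

Lemma rmul_raw_reduced w i : reduced w -> reduced (rmul_raw w i).
Proof.
case: w => [|j w'] //= Hw.
case: (j =P i) => [_|/eqP hne]; first exact: path_sorted Hw.
by rewrite /reduced /= eq_sym hne Hw.
Qed.

Record G2 := MkG2 { gword : seq 'I_3; gwordP : reduced gword }.
HB.instance Definition _ := [isSub for gword].
HB.instance Definition _ := [Equality of G2 by <:].

Definition rmul (g : G2) (i : 'I_3) : G2 :=
  MkG2 (rmul_raw_reduced i (gwordP g)).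

Definition e2 : G2 := @MkG2 [::] isT.
Definition gen (i : 'I_3) : G2 := rmul e2 i.
Definition mul (g h : G2) : G2 := foldr (fun i acc => rmul acc i) g (gword h).
Definition inv (g : G2) : G2 := foldl (fun acc i => rmul acc i) e2 (gword g).

Definition adj (g h : G2) : Prop := exists i : 'I_3, h = mul g (gen i).

Definition inball (x y : G2) : Prop := y = x \/ exists i : 'I_3, y = mul x (gen i).

Definition neighbours (x y : G2) : Prop :=
  x <> y /\ exists u v, adj u v /\ inball x u /\ inball x v /\ inball y u /\ inball y v.

(* configurations: sigma : G2 -> bool, spin value +1 for true, -1 for false.
   A configuration on the ball at x is represented by any f : G2 -> bool,
   only its restriction to the ball mattering. *)
Definition spin {R : numDomainType} (b : bool) : R := if b then 1%R else (-1)%R.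

Definition compatible (x : G2) (f : G2 -> bool) (y : G2) (f' : G2 -> bool) : Prop :=
  forall u v, adj u v -> inball x u -> inball x v -> inball y u -> inball y v ->
    f u = f' u /\ f v = f' v.

Definition nsame (x : G2) (f : G2 -> bool) : nat :=
  count (fun i : 'I_3 => f (mul x (gen i)) == f x) (enum 'I_3).

Definition inC (m : nat) (x : G2) (f : G2 -> bool) : Prop :=
  match m with
  | 1 => nsame x f = 3
  | 2 => nsame x f = 2
  | 3 => nsame x f = 0
  | 4 => nsame x f = 1
  | _ => False
  end.

Section Energy.
Variable R : realFieldType.
Local Open Scope ring_scope.

Definition Um (m : nat) (J1 J2 : R) : R :=
  match m with
  | 1 => 3 / 2 * J1 + 3 * J2
  | 2 => 1 / 2 * J1 - J2
  | 3 => - (3 / 2) * J1 + 3 * J2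
  | _ => - (1 / 2) * J1 - J2
  end.

Definition Umin (J1 J2 : R) : R :=
  Num.min (Num.min (Um 1 J1 J2) (Um 2 J1 J2)) (Num.min (Um 3 J1 J2) (Um 4 J1 J2)).

Definition inCS (J1 J2 : R) (x : G2) (f : G2 -> bool) : Prop :=
  exists m, (1 <= m <= 4)%N /\ Um m J1 J2 = Umin J1 J2 /\ inC m x f.

(* ball energy: edges of the ball are {x, x a_i}; pairs at distance 2 in the
   ball are the pairs of distinct leaves {x a_i, x a_j}, i < j. *)
Definition Uball (J1 J2 : R) (x : G2) (f : G2 -> bool) : R :=
  1 / 2 * J1 * \sum_(i < 3) spin (f x) * spin (f (mul x (gen i)))
  + J2 * \sum_(i < 3) \sum_(j < 3 | (i < j)%N)
           spin (f (mul x (gen i))) * spin (f (mul x (gen j))).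
End Energy.

Definition is_subgroup (H : G2 -> Prop) : Prop :=
  H e2 /\ (forall g h, H g -> H h -> H (mul g h)) /\ (forall g, H g -> H (inv g)).

Definition index_le (H : G2 -> Prop) (k : nat) : Prop :=
  exists reps : seq G2, (size reps <= k)%N /\
    forall g, exists2 r, r \in reps & exists h, H h /\ g = mul h r.

Definition invariant_under (H : G2 -> Prop) (sigma : G2 -> bool) : Prop :=
  forall g h, H g -> sigma (mul g h) = sigma h.

Definition periodic (sigma : G2 -> bool) : Prop :=
  exists H, is_subgroup H /\ (exists k, index_le H k) /\ invariant_under H sigma.

Definition period_le2 (sigma : G2 -> bool) : Prop :=
  exists H, is_subgroup H /\ index_le H 2 /\ invariant_under H sigma.

Definition ground_state {R : realFieldType} (J1 J2 : R) (a : G2 -> bool) : Prop :=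
  periodic a /\ forall x, Uball J1 J2 x a = Umin J1 J2.

(* Main.v *)
Require Import Defs.
From mathcomp Require Import all_boot all_order all_algebra ring lra.
Import Order.TTheory GRing.Theory Num.Theory.
Definition o0 : 'I_3 := @Ordinal 3 0 isT.
Definition o1 : 'I_3 := @Ordinal 3 1 isT.
Definition o2 : 'I_3 := @Ordinal 3 2 isT.
Lemma enum3 : enum 'I_3 = [:: o0; o1; o2].
Proof. by apply: (inj_map val_inj); rewrite val_enum_ord. Qed.
Lemma ord3 (i : 'I_3) : i = o0 \/ i = o1 \/ i = o2.
Proof.
case: i => [[|[|[|n]]] Hi]; [left|right;left|right;right|done]; exact: val_inj.
Qed.

Lemma mulgen x i : Defs.mul x (gen i) = rmul x i.
Proof. by []. Qed.

Lemma rmulK x i : rmul (rmul x i) i = x.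
Proof.
apply: val_inj; case: x => [[|j w] Hw] /=; first by rewrite eqxx.
case: (j =P i) => [ej|/eqP ne] /=.
  subst j; case: w Hw => [|k w] //= /andP [hik _].
  by rewrite eq_sym (negbTE hik).
by rewrite eqxx.
Qed.

Lemma G2_ind (P : G2 -> Prop) : P e2 -> (forall g i, P g -> P (rmul g i)) ->
  forall g, P g.
Proof.
move=> P0 PS; case=> w; elim: w => [|i w IH] Hw.
  by have -> : MkG2 Hw = e2 by apply: val_inj.
have Hw' : reduced w := path_sorted Hw.
have -> : MkG2 Hw = rmul (MkG2 Hw') i.
  apply: val_inj => /=; case: w Hw Hw' IH => [|j w] //= /andP [hij _] _ _.
  by rewrite eq_sym (negbTE hij).
exact/PS/IH.
Qed.

Definition par (g : G2) : bool := odd (size (gword g)).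

Lemma par_rmul g i : par (rmul g i) = ~~ par g.
Proof.
rewrite /par; case: g => [[|j w] Hw] //=.
by case: (j == i) => //=; rewrite negbK.
Qed.

Lemma par_mul g h : par (Defs.mul g h) = par g (+) par h.
Proof.
rewrite /Defs.mul.
suff H : forall s, par (foldr (fun i acc => rmul acc i) g s) = par g (+) odd (size s) by rewrite H.
elim=> [|i s IH] /=; first by rewrite addbF.
by rewrite par_rmul IH addbN.
Qed.

Lemma par_inv g : par (Defs.inv g) = par g.
Proof.
rewrite /Defs.inv.
suff H : forall s acc, par (foldl (fun acc i => rmul acc i) acc s) = par acc (+) odd (size s).
  by rewrite H.
elim=> [|i s IH] acc /=; first by rewrite addbF.
by rewrite IH par_rmul addNb addbN.
Qed.

Lemma ball_e_gen i u : inball e2 u -> inball (gen i) u -> u = e2 \/ u = gen i.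
Proof.
move=> h1 h2.
have hs : (size (gword u) <= 1)%N.
  by case: h1 => [->|[j ->]].
case: h2 => [->|[k hk]]; first by right.
rewrite mulgen in hk.
case: (i =P k) => [eik|/eqP ne].
  by subst k; left; rewrite hk rmulK.
move: hs; rewrite hk /= (negbTE ne) //.
Qed.

Lemma compat_e_gen i f f1 : f1 e2 = f e2 -> f1 (gen i) = f (gen i) ->
  compatible e2 f (gen i) f1.
Proof.
move=> h0 h1 u v _ hu hv hu' hv'.
by case: (@ball_e_gen i u hu hu') => ->; case: (@ball_e_gen i v hv hv') => ->.
Qed.

Lemma neigh_e_gen i : neighbours e2 (gen i).
Proof.
split; first by move/(congr1 gword).
exists e2, (gen i); split; first by exists i.
split; first by left.
split; first by right; exists i.
split; last by left.
by right; exists i; rewrite mulgen rmulK.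
Qed.

Lemma nsame3 x f i : nsame x f = 3 -> f (rmul x i) = f x.
Proof.
rewrite /nsame enum3 /= !mulgen.
have [->|[->|->]] := ord3 i;
 by case: eqP; case: eqP; case: eqP.
Qed.

Lemma nsame0 x f i : nsame x f = 0 -> f (rmul x i) != f x.
Proof.
rewrite /nsame enum3 /= !mulgen.
have [->|[->|->]] := ord3 i;
 by case: eqP; case: eqP; case: eqP.
Qed.
Lemma sum3 (R : nmodType) (F : 'I_3 -> R) : (\sum_(i<3) F i = F o0 + (F o1 + (F o2 + 0)))%R.
Proof. by rewrite -big_enum /= enum3 !big_cons big_nil. Qed.
Definition cls (n : nat) : nat := match n with 3 => 1 | 2 => 2 | 0 => 3 | _ => 4 end.
Lemma Uball_nsame (R : realFieldType) (J1 J2 : R) x f :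
  Uball J1 J2 x f = Um (cls (nsame x f)) J1 J2.
Proof.
rewrite /Uball /nsame enum3 sum3.
under eq_bigr do rewrite big_mkcond sum3 /=.
rewrite sum3 /=.
case: (f x); case: (f (Defs.mul x (gen o0)));case: (f (Defs.mul x (gen o1)));
  case: (f (Defs.mul x (gen o2))); rewrite /= /spin /Um; lra.
Qed.

Section Main.
Variables (R : realFieldType) (J1 J2 : R).
Hypothesis Hyp : (forall (x : G2) (f : G2 -> bool), inCS J1 J2 x f ->
     forall y : G2, neighbours x y ->
       (exists f' : G2 -> bool, inCS J1 J2 y f' /\ compatible x f y f') /\
       (forall f1 f2 : G2 -> bool,
          inCS J1 J2 y f1 -> compatible x f y f1 ->
          inCS J1 J2 y f2 -> compatible x f y f2 ->
          forall v, inball y v -> f1 v = f2 v)).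

Lemma no2 : Um 2 J1 J2 <> Umin J1 J2.
Proof.
move=> hU.
pose f := fun g : G2 => gword g != [:: o2].
pose f1 := fun g : G2 => gword g != [:: o2; o0].
pose f2 := fun g : G2 => gword g != [:: o1; o0].
have hf : inCS J1 J2 e2 f by exists 2; split => //; split => //; rewrite /inC /nsame enum3.
have [_ U] := Hyp _ _ hf _ (neigh_e_gen o0).
have h1 : inCS J1 J2 (gen o0) f1 by exists 2; split => //; split => //; rewrite /inC /nsame enum3.
have h2 : inCS J1 J2 (gen o0) f2 by exists 2; split => //; split => //; rewrite /inC /nsame enum3.
have hv : inball (gen o0) (rmul (gen o0) o1) by right; exists o1.
by have := U f1 f2 h1 (@compat_e_gen o0 f f1 erefl erefl) h2 (@compat_e_gen o0 f f2 erefl erefl) _ hv.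
Qed.

Lemma no4 : Um 4 J1 J2 <> Umin J1 J2.
Proof.
move=> hU.
pose f := fun g : G2 => (gword g == [::]) || (gword g == [:: o0]).
pose f1 := fun g : G2 => (gword g == [::]) || (gword g == [:: o0; o1]).
pose f2 := fun g : G2 => (gword g == [::]) || (gword g == [:: o2; o1]).
have hf : inCS J1 J2 e2 f by exists 4; split => //; split => //; rewrite /inC /nsame enum3.
have [_ U] := Hyp _ _ hf _ (neigh_e_gen o1).
have h1 : inCS J1 J2 (gen o1) f1 by exists 4; split => //; split => //; rewrite /inC /nsame enum3.
have h2 : inCS J1 J2 (gen o1) f2 by exists 4; split => //; split => //; rewrite /inC /nsame enum3.
have hv : inball (gen o1) (rmul (gen o1) o0) by right; exists o0.
by have := U f1 f2 h1 (@compat_e_gen o1 f f1 erefl erefl) h2 (@compat_e_gen o1 f f2 erefl erefl) _ hv.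
Qed.
End Main.

Theorem lemma5p2 (R : realFieldType) (J1 J2 : R) :
  (forall (x : G2) (f : G2 -> bool), inCS J1 J2 x f ->
     forall y : G2, neighbours x y ->
       (exists f' : G2 -> bool, inCS J1 J2 y f' /\ compatible x f y f') /\
       (forall f1 f2 : G2 -> bool,
          inCS J1 J2 y f1 -> compatible x f y f1 ->
          inCS J1 J2 y f2 -> compatible x f y f2 ->
          forall v, inball y v -> f1 v = f2 v)) ->
  forall a : G2 -> bool, ground_state J1 J2 a -> period_le2 a.
Proof.
move=> Hyp a [_ hg].
have hn : forall x, nsame x a = 0 \/ nsame x a = 3.
  move=> x; have := hg x; rewrite Uball_nsame.
  have : (nsame x a <= 3)%N.
    by rewrite /nsame; apply: leq_trans (count_size _ _) _; rewrite size_enum_ord.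
  case: (nsame x a) => [|[|[|[|n]]]] //.
  - by left.
  - by move=> _ h; case: (@no4 R J1 J2 Hyp h).
  - by move=> _ h; case: (@no2 R J1 J2 Hyp h).
  - by right.
have hp : forall x i, (nsame (rmul x i) a == 3) = (nsame x a == 3).
  move=> x i; case: (hn x) => hx.
  - have hne := nsame0 x a i hx.
    have : nsame (rmul x i) a != 3.
      apply/eqP => h3; have := nsame3 (rmul x i) a i h3; rewrite rmulK => e.
      by rewrite e eqxx in hne.
    by rewrite hx => /negbTE ->.
  - have e := nsame3 x a i hx.
    rewrite hx eqxx; case: (hn (rmul x i)) => [h0|-> //].
    by have := nsame0 (rmul x i) a i h0; rewrite rmulK e eqxx.
have hall : forall g, (nsame g a == 3) = (nsame e2 a == 3).
  by apply: G2_ind => // g i; rewrite hp.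
case: (hn e2) => h0.
- have ha : forall g, a g = a e2 (+) par g.
    apply: G2_ind; first by rewrite addbF.
    move=> g i IH.
    have hg0 : nsame g a = 0 by case: (hn g) => // h3; move: (hall g); rewrite h3 h0.
    have := nsame0 g a i hg0; rewrite IH par_rmul addbN.
    by case: (a (rmul g i)); case: (a e2 (+) par g).
  exists (fun g => par g = false); split; [split; [by [] | split] | split].
  + by move=> g h hg' hh; rewrite par_mul hg' hh.
  + by move=> g hg'; rewrite par_inv.
  + exists [:: e2; gen o0]; split => // g; case hpg: (par g).
      exists (gen o0); first by rewrite !inE eqxx orbT.
      exists (rmul g o0); split; first by rewrite par_rmul hpg.
      by rewrite mulgen rmulK.
    exists e2; first by rewrite inE eqxx.
    by exists g.
  + by move=> g h hg'; rewrite (ha (Defs.mul g h)) (ha h) par_mul hg'.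
- have ha : forall g, a g = a e2.
    apply: G2_ind => // g i IH.
    have hg3 : nsame g a = 3 by move: (hall g); rewrite h0 => /eqP.
    by rewrite (nsame3 g a i hg3) IH.
  exists (fun _ => True); split; [split => // | split].
  + exists [:: e2]; split => // g; exists e2; rewrite ?inE //; by exists g.
  + by move=> g h _; rewrite (ha (Defs.mul g h)) (ha h).
Qed.
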